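(* Let $t\geq 3$ be an integer and let $q$ be a prime power with $q\geq 2t-1$. Then there exists an MS$(q^{2t-1},t)$, i.e. a $t$-multimagic square of order $q^{2t-1}$.
   Context: An $n\times n$ integer matrix $A=(a_{i,j})$ is a general magic square if the sums of the entries in each row, each column, the main diagonal $\{a_{i,i}\}$ and the back diagonal $\{a_{i,n-1-i}\}$ are all equal. For a positive integer $t$, a general magic square $M=(m_{i,j})$ is a general $t$-multimagic square if for every $e=1,2,\dots,t$ the matrix $M^{*e}=(m_{i,j}^{e})$ (entrywise $e$-th power) is a general magic square. A general $t$-multimagic square of order $n$ whose $n^2$ entries are $n^2$ consecutive integers is called a $t$-multimagic square and denoted MS$(n,t)$. *)

(* Defs.v *)
From HB Require Import structures.
From mathcomp Require Import all_boot all_order all_algebra.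
Set Implicit Arguments. Unset Strict Implicit. Unset Printing Implicit Defensive.
Import Order.TTheory GRing.Theory Num.Theory.
Local Open Scope ring_scope.

Definition general_magic (n : nat) (A : 'M[int]_n) : Prop :=
  exists s : int,
    (forall i : 'I_n, \sum_(j < n) A i j = s) /\
    (forall j : 'I_n, \sum_(i < n) A i j = s) /\
    (\sum_(i < n) A i i = s) /\
    (\sum_(i < n) A i (rev_ord i) = s).

Definition mx_epow (n : nat) (M : 'M[int]_n) (e : nat) : 'M[int]_n :=
  \matrix_(i, j) (M i j ^+ e).

Definition general_multimagic (n t : nat) (M : 'M[int]_n) : Prop :=
  forall e : nat, (1 <= e <= t)%N -> general_magic (mx_epow M e).

Definition consecutive_entries (n : nat) (M : 'M[int]_n) : Prop :=
  exists a : int,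
    perm_eq [seq M ij.1 ij.2 | ij : 'I_n * 'I_n]
            [seq a + k%:Z | k <- iota 0 (n * n)].

Definition multimagic_square (n t : nat) (M : 'M[int]_n) : Prop :=
  general_multimagic t M /\ consecutive_entries M.

Definition prime_power (q : nat) : Prop :=
  exists p k : nat, prime p /\ (0 < k)%N /\ q = (p ^ k)%N.

(* Main.v *)
Require Import Defs.
From mathcomp Require Import all_boot all_order all_algebra.
From HB Require Import structures.
From mathcomp Require Import all_field zify ring.
Set Implicit Arguments. Unset Strict Implicit. Unset Printing Implicit Defensive.
Import Order.TTheory GRing.Theory Num.Theory.

Local Open Scope ring_scope.

Section PolyFacts.
Variable F : finFieldType.

Lemma vand0 (p : nat) (a : nat -> F) (al : seq F) :
  uniq al -> size al = p ->
  (forall x, x \in al -> \sum_(j < p) a j * x ^+ j = 0) ->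
  forall j, (j < p)%N -> a j = 0.
Proof.
move=> Ual Sal H j jp.
have P0 : \poly_(i < p) a i = 0.
  apply: (@roots_geq_poly_eq0 _ _ al) => //.
  - by apply/allP => x xal; rewrite /root horner_poly H.
  - by rewrite Sal size_poly.
by have := congr1 (fun q : {poly F} => q`_j) P0; rewrite coef_poly jp coef0.
Qed.

Lemma interp (al c : seq F) : uniq al -> size c = size al ->
  exists a : nat -> F, (forall j, (size al <= j)%N -> a j = 0) /\
    forall r, (r < size al)%N ->
      \sum_(j < size al) a j * (nth 0 al r) ^+ j = nth 0 c r.
Proof.
move=> Ual Sc; set p := size al.
pose Phi (b : {ffun 'I_p -> F}) : {ffun 'I_p -> F} :=
  [ffun r : 'I_p => \sum_(j < p) b j * (nth 0 al r) ^+ j].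
have injPhi : injective Phi.
  move=> b1 b2 E; apply/ffunP => j; apply/eqP; rewrite -subr_eq0; apply/eqP.
  pose a (j : nat) : F := if insub j is Some j' then b1 j' - b2 j' else 0.
  have := @vand0 p a al Ual erefl _ j (ltn_ord j).
  rewrite /a valK; apply => x /(nthP 0) [r rp <-].
  have := congr1 (fun f : {ffun 'I_p -> F} => f (Ordinal rp)) E; rewrite !ffunE.
  move=> E'; rewrite (eq_bigr (fun i : 'I_p => b1 i * (nth 0 al r) ^+ i - b2 i * (nth 0 al r) ^+ i)).
    by rewrite sumrB E' subrr.
  by move=> i _; rewrite valK mulrBl.
have [Psi PhiK PsiK] := injF_bij injPhi.
pose b := Psi [ffun r : 'I_p => nth 0 c r].
exists (fun j => if insub j is Some j' then b j' else 0); split.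
  by move=> j pj; rewrite insubF // ltnNge pj.
move=> r rp; have := congr1 (fun f : {ffun 'I_p -> F} => f (Ordinal rp)) (PsiK [ffun r : 'I_p => nth 0 c r]).
rewrite !ffunE /= => <-.
by apply: eq_bigr => i _; rewrite valK.
Qed.

End PolyFacts.

Local Close Scope ring_scope.


Section Invol.
Variables (T : finType) (f : T -> T).
Hypothesis fK : involutive f.
Hypothesis fix1 : forall x y, f x = x -> f y = y -> x = y.

Lemma memf (P : pred T) x : (x \in [seq y <- enum T | P y]) = P x.
Proof. by rewrite mem_filter mem_enum andbT. Qed.

Definition Lh := [seq x <- enum T | (enum_rank x < enum_rank (f x))%N].
Definition Fx := [seq x <- enum T | f x == x].
Definition Eh := Lh ++ Fx ++ rev (map f Lh).

Lemma Fx_rev : rev Fx = Fx.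
Proof.
have : uniq Fx by rewrite filter_uniq ?enum_uniq.
have : all (fun x => f x == x) Fx by apply: filter_all.
case: Fx => [|x [|y s]] //= /and3P [/eqP fx /eqP fy _] /andP [].
by rewrite inE (fix1 fx fy) eqxx.
Qed.

Lemma Eh_rev : rev Eh = map f Eh.
Proof.
rewrite /Eh !rev_cat revK Fx_rev !map_cat map_rev (mapK fK).
rewrite -catA; congr (_ ++ (_ ++ _)).
rewrite -{1}[Fx]map_id; apply/eq_in_map => x.
by rewrite mem_filter => /andP [/eqP].
Qed.

Lemma Eh_mem x : x \in Eh.
Proof.
rewrite /Eh /Lh /Fx !mem_cat !memf mem_rev.
have [lt|lt|eq] := ltngtP (enum_rank x) (enum_rank (f x)).
- by [].
- apply/orP; right; apply/orP; right; apply/mapP; exists (f x); last by rewrite fK.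
  by rewrite memf fK.
- have e : f x = x by apply/esym/enum_rank_inj/val_inj.
  by rewrite e eqxx orbT.
Qed.

Lemma Eh_uniq : uniq Eh.
Proof.
have fI : injective f := can_inj fK.
have uL : uniq Lh by rewrite filter_uniq // enum_uniq.
have uF : uniq Fx by rewrite filter_uniq // enum_uniq.
rewrite /Eh !cat_uniq rev_uniq (map_inj_uniq fI) uL uF /=.
rewrite andbT; apply/andP; split.
- apply/hasPn => x; rewrite mem_cat mem_rev => /orP [|/mapP [y]].
    by rewrite /Fx /Lh !memf => /eqP ->; rewrite ltnn.
  rewrite /Lh !memf => lt ->; rewrite fK; apply/negP => lt2.
  by move: (ltn_trans lt lt2); rewrite ltnn.
- apply/hasPn => x; rewrite mem_rev => /mapP [y]; rewrite /Lh memf => lt ->.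
  rewrite /Fx memf; apply/negP => /eqP e.
  by move: e lt; rewrite fK => <-; rewrite ltnn.
Qed.

Lemma Eh_size : size Eh = #|T|.
Proof.
rewrite -(card_uniqP Eh_uniq); apply: eq_card => x; by rewrite Eh_mem.
Qed.

Lemma Eh_nth_rev x0 i : (i < size Eh)%N ->
  nth x0 Eh (size Eh - i.+1) = f (nth x0 Eh i).
Proof.
move=> lt; rewrite -nth_rev // Eh_rev (nth_map x0) //.
Qed.

End Invol.

Local Open Scope ring_scope.

Section Moment.
Variables (F : finFieldType) (J K : finType) (t : nat).
Local Notation V := {ffun J -> F}.
Local Notation Z := {ffun K -> F}.

Definition good (D : V -> Z) :=
  (forall v w, D (v + w) = D v + D w - D 0) /\
  (forall S : {set K}, (#|S| <= t)%N -> forall u : Z,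
      exists v, forall k, k \in S -> D v k = u k).

Definition pr (S : {set K}) (z : Z) : Z := [ffun k => if k \in S then z k else 0].

Lemma prD S a b : pr S (a + b) = pr S a + pr S b.
Proof. by apply/ffunP => k; rewrite !ffunE; case: (k \in S); rewrite ?addr0. Qed.
Lemma prN S a : pr S (- a) = - pr S a.
Proof. by apply/ffunP => k; rewrite !ffunE; case: (k \in S); rewrite ?oppr0. Qed.
Lemma prB S a b : pr S (a - b) = pr S a - pr S b.
Proof. by rewrite prD prN. Qed.
Lemma prK S z : pr S (pr S z) = pr S z.
Proof. by apply/ffunP => k; rewrite !ffunE; case: (k \in S). Qed.

Definition US S := [set u : Z | pr S u == u].
Definition ker (D : V -> Z) S := [set v : V | pr S (D v) == pr S (D 0)].

Lemma fiber_sum D (S : {set K}) (G : Z -> int) : good D -> (#|S| <= t)%N ->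
  (forall z, G (pr S z) = G z) ->
  \sum_(v : V) G (D v) = (#|ker D S|)%:R * \sum_(u in US S) G u.
Proof.
move=> [Daff Dsur] St GS.
rewrite (eq_bigr (fun v => G (pr S (D v)))); last by move=> v _; rewrite GS.
rewrite (partition_big (fun v => pr S (D v)) (mem (US S))) /=; last first.
  by move=> v _; rewrite inE prK.
rewrite mulr_sumr; apply: eq_bigr => u; rewrite inE => /eqP uS.
rewrite (eq_bigr (fun _ => G u)); last by move=> v /eqP ->.
have [v0 Hv0] := Dsur S St u.
have pv0 : pr S (D v0) = u.
  rewrite -uS; apply/ffunP => k; rewrite !ffunE.
  by case: ifP => // /Hv0 ->.
rewrite (reindex_inj (addIr v0)) /=.
rewrite (eq_bigl (fun w => w \in ker D S)); last first.
  move=> w; rewrite inE Daff !prB prD pv0.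
  apply/eqP/eqP => [H|->]; last by rewrite addrAC subrr add0r.
  apply/eqP; rewrite -subr_eq0; apply/eqP; apply: (@addIr _ u).
  by rewrite add0r addrAC.
by rewrite sumr_const mulr_natl.
Qed.

Lemma card_US S : (0 < #|US S|)%N.
Proof.
apply/card_gt0P; exists 0; rewrite inE; apply/eqP/ffunP => k; rewrite !ffunE.
by case: ifP.
Qed.

Lemma ker_eq D1 D2 (S : {set K}) : good D1 -> good D2 -> (#|S| <= t)%N ->
  #|ker D1 S| = #|ker D2 S|.
Proof.
move=> g1 g2 St.
have h1 := @fiber_sum D1 S (fun _ => 1) g1 St (fun _ => erefl).
have h2 := @fiber_sum D2 S (fun _ => 1) g2 St (fun _ => erefl).
move: h1; rewrite h2 => /eqP.
rewrite [\sum_(u in US S) _]sumr_const -[_ *+ #|US S|]mulr_natr mul1r -!natrM eqr_nat.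
rewrite (eqn_pmul2r (card_US S)); by move/eqP.
Qed.

Lemma moment_eq D1 D2 (e : nat) (w : K -> F -> int) :
  good D1 -> good D2 -> (e <= t)%N ->
  \sum_(v : V) (\sum_(k : K) w k (D1 v k)) ^+ e =
  \sum_(v : V) (\sum_(k : K) w k (D2 v k)) ^+ e.
Proof.
move=> g1 g2 et.
have expand D : \sum_(v : V) (\sum_(k : K) w k (D v k)) ^+ e =
   \sum_(s : {ffun 'I_e -> K}) \sum_(v : V) \prod_(j < e) w (s j) (D v (s j)).
  rewrite exchange_big; apply: eq_bigr => v _.
  rewrite -[e in LHS]card_ord -prodr_const.
  exact: bigA_distr_bigA.
rewrite !expand; apply: eq_bigr => s _.
set S := [set s j | j : 'I_e].
have St : (#|S| <= t)%N.
  by apply: leq_trans (leq_imset_card _ _) _; rewrite card_ord.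
pose G (z : Z) := \prod_(j < e) w (s j) (z (s j)).
have GS z : G (pr S z) = G z.
  by apply: eq_bigr => j _; rewrite ffunE imset_f.
rewrite (fiber_sum (G := G) g1 St GS) (fiber_sum (G := G) g2 St GS).
by rewrite (ker_eq g1 g2 St).
Qed.

End Moment.

Local Close Scope ring_scope.


Lemma digit_shift B N (c : 'I_N.+1 -> nat) :
  \sum_(i < N) c (lift ord0 i) * B ^ (lift ord0 i) =
  B * \sum_(i < N) c (lift ord0 i) * B ^ i.
Proof.
rewrite big_distrr; apply: eq_bigr => j _ /=.
by rewrite /bump /= add1n expnS mulnCA.
Qed.

Lemma digits_inj B N (a b : 'I_N -> nat) :
  (forall i, a i < B) -> (forall i, b i < B) ->
  \sum_(i < N) a i * B ^ i = \sum_(i < N) b i * B ^ i -> a =1 b.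
Proof.
elim: N a b => [|N IH] a b Ha Hb E i; first by case: i.
move: E; rewrite !big_ord_recl !digit_shift /= !expn0 !muln1 => E.
have B0 : 0 < B by apply: leq_ltn_trans (Ha ord0).
have e0 : a ord0 = b ord0.
  have := congr1 (modn^~ B) E.
  by rewrite ![_ + B * _]addnC ![B * _]mulnC !modnMDl !modn_small.
have E' : \sum_(i < N) a (lift ord0 i) * B ^ i = \sum_(i < N) b (lift ord0 i) * B ^ i.
  have := congr1 (divn^~ B) E.
  by rewrite ![_ + B * _]addnC ![B * _]mulnC !divnMDl // !divn_small // !addn0.
have IH' := IH _ _ (fun i => Ha _) (fun i => Hb _) E'.
case: (unliftP ord0 i) => [j ->|->] //.
Qed.

Lemma digits_lt B N (a : 'I_N -> nat) :
  (forall i, a i < B) -> \sum_(i < N) a i * B ^ i < B ^ N.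
Proof.
elim: N a => [|N IH] a Ha; first by rewrite big_ord0.
rewrite big_ord_recl digit_shift /= expn0 muln1 expnS.
have X := IH _ (fun i => Ha (lift ord0 i)).
apply: (@leq_trans (B * (\sum_(i < N) a (lift ord0 i) * B ^ i).+1)).
  by rewrite mulnS ltn_add2r Ha.
exact: leq_mul (leqnn B) X.
Qed.

Section Nval.
Variables (F K : finType).
Definition Nval (z : {ffun K -> F}) : nat :=
  \sum_(k : K) enum_rank (z k) * #|F| ^ enum_rank k.

Lemma NvalE z : Nval z = \sum_(i < #|K|) enum_rank (z (enum_val i)) * #|F| ^ i.
Proof.
rewrite /Nval (reindex (@enum_val K predT)) /=; last first.
  by exists (@enum_rank K) => x _; rewrite ?enum_valK ?enum_rankK.
by apply: eq_bigr => i _; rewrite enum_valK.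
Qed.

Lemma Nval_inj : injective Nval.
Proof.
move=> z1 z2; rewrite !NvalE => /digits_inj E.
apply/ffunP => k; rewrite -(enum_rankK k).
apply: enum_rank_inj; apply: val_inj; apply: E => i; exact: ltn_ord.
Qed.

Lemma Nval_lt z : Nval z < #|F| ^ #|K|.
Proof. by rewrite NvalE; apply: digits_lt => i; exact: ltn_ord. Qed.
End Nval.

Local Open Scope ring_scope.

Section Construction.
Variables (F : finFieldType) (s : nat).
Local Notation t := s.+3.
Definition J := option ('I_s.+2 * bool).
Local Notation V := {ffun J -> F}.
Definition m := (s.+2).*2.+1.
Definition K := ('I_m * bool)%type.
Local Notation Z := {ffun K -> F}.

Variable alpha : nat -> F.
Hypothesis alpha_inj : forall i j, (i < m)%N -> (j < m)%N -> alpha i = alpha j -> i = j.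
Variables (u0 v0 : F).
Hypothesis uv : u0 != v0.
Hypothesis u0n : [/\ u0 != 0, u0 != 1 & u0 != -1].
Hypothesis v0n : [/\ v0 != 0, v0 != 1 & v0 != -1].

Definition co (b : bool) (x : V) (j : nat) : F :=
  if (j < s.+2)%N then x (Some (inord j, b)) else x None.
Definition Ev (b : bool) (x : V) (a : F) : F := \sum_(j < t) co b x j * a ^+ j.

Lemma coD b x y j : co b (x + y) j = co b x j + co b y j.
Proof. by rewrite /co; case: ifP; rewrite !ffunE. Qed.
Lemma coN b x j : co b (- x) j = - co b x j.
Proof. by rewrite /co; case: ifP; rewrite !ffunE. Qed.
Lemma EvD b x y a : Ev b (x + y) a = Ev b x a + Ev b y a.
Proof. by rewrite /Ev -big_split; apply: eq_bigr => j _; rewrite coD mulrDl. Qed.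
Lemma EvN b x a : Ev b (- x) a = - Ev b x a.
Proof. by rewrite /Ev -sumrN; apply: eq_bigr => j _; rewrite coN mulNr. Qed.
Lemma EvB b x y a : Ev b (x - y) a = Ev b x a - Ev b y a.
Proof. by rewrite EvD EvN. Qed.
Lemma Ev0 b a : Ev b 0 a = 0.
Proof. by rewrite /Ev big1 // => j _; rewrite /co; case: ifP; rewrite ffunE mul0r. Qed.

Lemma sum_widen (p N : nat) (f : nat -> F) : (p <= N)%N ->
  (forall j, (p <= j)%N -> f j = 0) -> \sum_(j < N) f j = \sum_(j < p) f j.
Proof.
move=> pN H; rewrite (big_ord_widen N f pN) [RHS]big_mkcond /=.
by apply: eq_bigr => j _; case: ifP => // /negbT; rewrite -leqNgt => /H ->.
Qed.

Lemma interpP (P : {set 'I_m}) (c : 'I_m -> F) :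
  exists a : nat -> F, (forall j, (#|P| <= j)%N -> a j = 0) /\
    forall i, i \in P -> forall N, (#|P| <= N)%N ->
      \sum_(j < N) a j * alpha i ^+ j = c i.
Proof.
pose al := [seq alpha (val i) | i <- enum P].
pose cl := [seq c i | i <- enum P].
have Ual : uniq al.
  rewrite map_inj_in_uniq; first exact: enum_uniq.
  move=> i j _ _ E; apply: val_inj; exact: alpha_inj (ltn_ord i) (ltn_ord j) E.
have Sal : size al = #|P| by rewrite size_map cardE.
have Scl : size cl = size al by rewrite !size_map.
have [a [Za Ha]] := interp Ual Scl.
exists a; split; first by move=> j; rewrite -Sal; apply: Za.
move=> i iP N PN; rewrite (@sum_widen _ _ (fun j => a j * alpha i ^+ j) PN); last first.
  by move=> j; rewrite -Sal => /Za ->; rewrite mul0r.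
have ri : (index i (enum P) < size (enum P))%N by rewrite index_mem mem_enum.
have e1 : nth 0 al (index i (enum P)) = alpha i.
  by rewrite (nth_map i) // nth_index // mem_enum.
have e2 : nth 0 cl (index i (enum P)) = c i.
  by rewrite (nth_map i) // nth_index // mem_enum.
rewrite -Sal -e1 -e2; apply: Ha; by rewrite size_map.
Qed.

Lemma code_sur (P0 P1 : {set 'I_m}) (c0 c1 : 'I_m -> F) :
  (#|P0| + #|P1| <= t)%N ->
  exists v : V, (forall i, i \in P0 -> Ev false v (alpha i) = c0 i) /\
                (forall i, i \in P1 -> Ev true v (alpha i) = c1 i).
Proof.
move=> Pt.
have [a0 [Z0 H0]] := interpP P0 c0.
have [a1 [Z1 H1]] := interpP P1 c1.
pose v : V := [ffun o : J => match o with
                         | Some (j, b) => (if b then a1 else a0) (nat_of_ord j)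
                         | None => a0 s.+2 + a1 s.+2 end].
have coE b j : (j < t)%N -> (b == false -> a1 s.+2 = 0) -> (b == true -> a0 s.+2 = 0) ->
   co b v j = (if b then a1 else a0) j.
  move=> jt h1 h0; rewrite /co !ffunE; case: ifP => jl.
    by rewrite inordK.
  have -> : j = s.+2 by lia.
  by case: b h1 h0 => [_ h0|h1 _]; [rewrite h0 // add0r | rewrite h1 // addr0].
exists v; split => i iP.
- have P1s : (#|P1| <= s.+2)%N.
    have : (0 < #|P0|)%N by apply/card_gt0P; exists i.
    lia.
  rewrite -(H0 i iP t) ?(leq_trans (leq_addr _ _) Pt) //.
  apply: eq_bigr => j _; rewrite coE //; by move=> _; apply: Z1.
- have P0s : (#|P0| <= s.+2)%N.
    have : (0 < #|P1|)%N by apply/card_gt0P; exists i.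
    lia.
  rewrite -(H1 i iP t) ?(leq_trans (leq_addl _ _) Pt) //.
  apply: eq_bigr => j _; rewrite coE //; by move=> _; apply: Z0.
Qed.

Definition Rw (b : bool) (i : nat) : F :=
  if b then (if (i < t)%N then v0 else u0) else (if (i < t)%N then u0 else v0).

Lemma Rw_nz b i : [/\ Rw b i != 0, 1 - Rw b i != 0 & 1 + Rw b i != 0].
Proof.
have h x : [/\ x != 0, x != 1 & x != -1] -> [/\ x != 0, 1 - x != 0 & 1 + x != 0].
  case=> h0 h1 h2; split.
  - exact: h0.
  - by rewrite subr_eq0 eq_sym.
  - by rewrite addrC addr_eq0.
by rewrite /Rw; case: b; case: ifP => _; apply: h.
Qed.

Definition dd (x y : V) : Z :=
  [ffun k : K => Ev k.2 x (alpha k.1) - Rw k.2 k.1 * Ev k.2 y (alpha k.1)].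

Lemma card_split (S : {set K}) :
  (#|[set i | (i, false) \in S]| + #|[set i | (i, true) \in S]| <= #|S|)%N.
Proof.
set B := [set k : K | k.2].
have inj (b : bool) : injective (fun i : 'I_m => (i, b)) by move=> i j [].

rewrite -(cardsID B S) addnC leq_add //.
- rewrite -(card_imset _ (inj true)).
  apply: subset_leq_card; apply/subsetP => k /imsetP [i]; rewrite !inE => h ->.
  by rewrite h.
- rewrite -(card_imset _ (inj false)).
  apply: subset_leq_card; apply/subsetP => k /imsetP [i]; rewrite !inE => h ->.
  by rewrite h.
Qed.

Lemma good_form (D : V -> Z) (A B : K -> F) :
  (forall k, B k != 0) ->
  (forall v k, D v k = A k + B k * Ev k.2 v (alpha k.1)) -> good t D.
Proof.
move=> Bnz HD; split.
  move=> v w; apply/ffunP => k; rewrite !ffunE !HD EvD Ev0.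
  ring.
move=> S St u.
have [v [Hv0 Hv1]] := @code_sur [set i | (i, false) \in S] [set i | (i, true) \in S]
   (fun i => (u (i, false) - A (i, false)) / B (i, false))
   (fun i => (u (i, true) - A (i, true)) / B (i, true))
   (leq_trans (card_split S) St).
exists v => -[i b] kS; rewrite HD /=.
case: b kS => kS.
- by rewrite Hv1 ?inE // mulrC divfK ?Bnz // addrC subrK.
- by rewrite Hv0 ?inE // mulrC divfK ?Bnz // addrC subrK.
Qed.

Lemma tm : (t + s.+2 = m)%N.
Proof. by rewrite /m -addnn; lia. Qed.

Lemma vanish (c : nat -> F) lo p : (lo + p <= m)%N ->
  (forall i, (lo <= i < lo + p)%N -> \sum_(j < p) c j * alpha i ^+ j = 0) ->
  forall j, (j < p)%N -> c j = 0.
Proof.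
move=> lp H; apply: (@vand0 _ p c [seq alpha i | i <- iota lo p]).
- rewrite map_inj_in_uniq ?iota_uniq // => i j; rewrite !mem_iota.
  move=> /andP [_ hi] /andP [_ hj]; apply: alpha_inj; lia.
- by rewrite size_map size_iota.
- by move=> x /mapP [i]; rewrite mem_iota => hi ->; apply: H.
Qed.

Lemma Ev_comb b (X Y : V) r a :
  \sum_(j < t) (co b X j - r * co b Y j) * a ^+ j = Ev b X a - r * Ev b Y a.
Proof.
rewrite /Ev mulr_sumr -sumrB; apply: eq_bigr => j _; by rewrite mulrBl mulrA.
Qed.

Lemma Ev_low b (Y : V) a : Y None = 0 -> Ev b Y a = \sum_(j < s.+2) co b Y j * a ^+ j.
Proof. by move=> Y0; rewrite /Ev big_ord_recr /= /co ltnn Y0 mul0r addr0. Qed.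

Lemma dd_inj x y x' y' : dd x y = dd x' y' -> x = x' /\ y = y'.
Proof.
move=> E.
have key b i : (i < m)%N -> Ev b (x - x') (alpha i) = Rw b i * Ev b (y - y') (alpha i).
  move=> im; have := congr1 (fun z : Z => z (Ordinal im, b)) E; rewrite !ffunE /=.
  move=> h; rewrite !EvB -[Ev b x _](subrK (Rw b i * Ev b y (alpha i))) h; ring.
set X := x - x' in key *; set Y := y - y' in key *.
have tm' : (t <= m)%N by rewrite -tm leq_addr.
have c0 j : (j < t)%N -> co false X j - u0 * co false Y j = 0.
  move: j; apply: (@vanish (fun j => co false X j - u0 * co false Y j) 0 t) => // i /andP [_ hi].
  by rewrite Ev_comb key ?(leq_trans hi) // /Rw hi subrr.
have c1 j : (j < t)%N -> co true X j - v0 * co true Y j = 0.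
  move: j; apply: (@vanish (fun j => co true X j - v0 * co true Y j) 0 t) => // i /andP [_ hi].
  by rewrite Ev_comb key ?(leq_trans hi) // /Rw hi subrr.
have YN : Y None = 0.
  have h0 := c0 s.+2 (ltnSn _); have h1 := c1 s.+2 (ltnSn _).
  rewrite /co ltnn in h0 h1.
  have e : (u0 - v0) * Y None = (X None - v0 * Y None) - (X None - u0 * Y None) by ring.
  move: e; rewrite h0 h1 subrr => /eqP; rewrite mulf_eq0 subr_eq0 (negbTE uv) /=.
  by move/eqP.
have EX b a : Ev b X a = (if b then v0 else u0) * Ev b Y a.
  apply/eqP; rewrite -subr_eq0 -Ev_comb; apply/eqP; rewrite big1 // => j _.
  by case: b; rewrite ?c0 ?c1 ?mul0r.
have low b j : (j < s.+2)%N -> co b Y j = 0.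
  move: j; apply: (@vanish (fun j => co b Y j) t s.+2); first by rewrite tm.
  move=> i /andP [ti hi]; rewrite -Ev_low //.
  have him : (i < m)%N by rewrite -tm.
  have := key b i him; rewrite EX /Rw ltnNge ti /=.
  move=> /eqP; rewrite -subr_eq0 -mulrBl mulf_eq0 subr_eq0.
  have uv' : (v0 == u0) = false by rewrite eq_sym (negbTE uv).
  by case: b; rewrite ?(negbTE uv) ?uv' /= => /eqP.
have Y0 : Y = 0.
  apply/ffunP => o; rewrite [in RHS]ffunE; case: o => [[j b]|]; last exact: YN.
  by have := low b j (ltn_ord j); rewrite /co ltn_ord inord_val.
have z0 o : (0 : V) o = 0 by rewrite ffunE.
have X0 : X = 0.
  apply/ffunP => o; rewrite [in RHS]ffunE; case: o => [[j b]|].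
  - have := (if b as b' return co b' X j - (if b' then v0 else u0) * co b' Y j = 0
             then c1 j (leqW (ltn_ord j)) else c0 j (leqW (ltn_ord j))).
    by rewrite Y0 /co ltn_ord inord_val z0 mulr0 subr0.
  - have := c0 s.+2 (ltnSn _); by rewrite Y0 /co ltnn z0 mulr0 subr0.
by split; apply/eqP; rewrite -subr_eq0; apply/eqP; [exact: X0 | exact: Y0].
Qed.

Definition cvec : V := [ffun => 1].
Definition sig (v : V) : V := cvec - v.

Lemma sigK : involutive sig.
Proof. by move=> v; rewrite /sig opprB addrC subrK. Qed.

Lemma sig_fix x y : sig x = x -> sig y = y -> x = y.
Proof.
rewrite /sig => hx hy; apply/ffunP => o.
have ex : x o + x o = 1.
  by have := congr1 (fun z : V => z o) hx; rewrite !ffunE => h; rewrite -{1}h subrK.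
have ey : y o + y o = 1.
  by have := congr1 (fun z : V => z o) hy; rewrite !ffunE => h; rewrite -{1}h subrK.
have e : (x o - y o) * (1 + 1) = (x o + x o) - (y o + y o) by ring.
rewrite ex ey subrr in e.
move/eqP: e; rewrite mulf_eq0 => /orP [|/eqP h2].
  by rewrite subr_eq0 => /eqP.
have : x o * (1 + 1) = x o + x o by ring.
by rewrite ex h2 mulr0 => /eqP; rewrite eq_sym oner_eq0.
Qed.

Lemma good_row x0 : good t (dd x0).
Proof.
apply: (good_form (A := fun k => Ev k.2 x0 (alpha k.1)) (B := fun k => - Rw k.2 k.1)).
  by move=> k; rewrite oppr_eq0; case: (Rw_nz k.2 k.1).
by move=> v k; rewrite ffunE mulNr.
Qed.

Lemma good_col y0 : good t (fun v => dd v y0).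
Proof.
apply: (good_form (A := fun k => - Rw k.2 k.1 * Ev k.2 y0 (alpha k.1)) (B := fun k => 1)).
  by move=> k; rewrite oner_eq0.
by move=> v k; rewrite ffunE mul1r addrC mulNr.
Qed.

Lemma good_diag : good t (fun v => dd v v).
Proof.
apply: (good_form (A := fun k => 0) (B := fun k => 1 - Rw k.2 k.1)).
  by move=> k; case: (Rw_nz k.2 k.1).
by move=> v k; rewrite ffunE; ring.
Qed.

Lemma good_anti : good t (fun v => dd v (sig v)).
Proof.
apply: (good_form (A := fun k => - Rw k.2 k.1 * Ev k.2 cvec (alpha k.1))
                  (B := fun k => 1 + Rw k.2 k.1)).
  by move=> k; case: (Rw_nz k.2 k.1).
by move=> v k; rewrite ffunE /sig EvB; ring.
Qed.

Variable n : nat.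
Hypothesis hn : #|V| = n.

Definition psi (i : 'I_n) : V := nth 0 (Eh sig) i.

Lemma size_Eh : size (Eh sig) = n.
Proof. by rewrite (Eh_size sigK) hn. Qed.

Lemma psi_inj : injective psi.
Proof.
move=> i j; rewrite /psi => /eqP; rewrite nth_uniq ?size_Eh //.
  by move/eqP/val_inj.
exact: (Eh_uniq sigK).
Qed.

Lemma psi_bij : bijective psi.
Proof. by apply: (inj_card_bij psi_inj); rewrite card_ord hn. Qed.

Lemma psi_rev i : psi (rev_ord i) = sig (psi i).
Proof. by rewrite /psi /= -{1}size_Eh (Eh_nth_rev sigK sig_fix) // size_Eh. Qed.

Lemma sum_psi (G : V -> int) : \sum_(i < n) G (psi i) = \sum_(v : V) G v.
Proof. by rewrite [RHS](reindex psi) //; exact: onW_bij psi_bij. Qed.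

Definition Mx : 'M[int]_n := \matrix_(i, j) (Nval (dd (psi i) (psi j)))%:Z.
Definition wt (k : K) (a : F) : int := (enum_rank a * #|F| ^ enum_rank k)%N%:Z.

Lemma NvalZ (z : Z) : (Nval z)%:Z = \sum_k wt k (z k).
Proof.
by rewrite /Nval -natz natr_sum; apply: eq_bigr => k _; rewrite /wt natz.
Qed.

Definition sval e := \sum_(v : V) ((Nval (dd 0 v))%:Z) ^+ e.

Lemma svalE e : (e <= t)%N -> forall D : V -> Z, good t D ->
  \sum_(v : V) ((Nval (D v))%:Z) ^+ e = sval e.
Proof.
move=> et D gD; rewrite /sval.
under eq_bigr do rewrite NvalZ.
under [RHS]eq_bigr do rewrite NvalZ.
apply: (moment_eq (t := t)) => //; exact: good_row.
Qed.

Lemma magic e : (e <= t)%N -> general_magic (mx_epow Mx e).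
Proof.
move=> et; exists (sval e); split; [|split; [|split]].
- move=> i; rewrite -(svalE et (good_row (psi i))) -sum_psi.
  by apply: eq_bigr => j _; rewrite !mxE.
- move=> j; rewrite -(svalE et (good_col (psi j))) -sum_psi.
  by apply: eq_bigr => i _; rewrite !mxE.
- rewrite -(svalE et good_diag) -sum_psi.
  by apply: eq_bigr => i _; rewrite !mxE.
- rewrite -(svalE et good_anti) -sum_psi.
  by apply: eq_bigr => i _; rewrite !mxE psi_rev.
Qed.

Lemma cardV : #|V| = (#|F| ^ m)%N.
Proof.
rewrite card_ffun card_option card_prod card_ord card_bool; apply: (congr1 (expn _)).
by rewrite /m -addnn; lia.
Qed.

Lemma cardK : #|{: K}| = (m + m)%N.
Proof. by rewrite card_prod card_ord card_bool; lia. Qed.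

Lemma consec : consecutive_entries Mx.
Proof.
exists 0.
pose g := fun ij : 'I_n * 'I_n => Nval (dd (psi ij.1) (psi ij.2)).
have -> : [seq Mx ij.1 ij.2 | ij : 'I_n * 'I_n] = map Posz [seq g ij | ij : 'I_n * 'I_n].
  by rewrite -map_comp; apply: eq_map => ij; rewrite mxE.
have -> : [seq 0 + k%:Z | k <- iota 0 (n * n)] = map Posz (iota 0 (n * n)).
  by apply: eq_map => k; rewrite add0r.
apply: perm_map.
have ginj : injective g.
  move=> [i j] [i' j'] /Nval_inj /dd_inj [] /psi_inj /= -> /psi_inj /= -> //.
have U : uniq [seq g ij | ij : 'I_n * 'I_n] by rewrite map_inj_uniq ?enum_uniq.
have sub : {subset [seq g ij | ij : 'I_n * 'I_n] <= iota 0 (n * n)}.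
  move=> k /mapP [ij _ ->]; rewrite mem_iota add0n.
  by apply: leq_trans (Nval_lt _) _; rewrite cardK -hn cardV -expnD.
have sz : (size (iota 0 (n * n)) <= size [seq g ij | ij : 'I_n * 'I_n])%N.
  by rewrite size_iota size_map -cardE card_prod card_ord.
have [_ E] := uniq_min_size U sub sz.
apply: uniq_perm => //; exact: iota_uniq.
Qed.

Lemma construction : exists M : 'M[int]_n, multimagic_square t M.
Proof.
exists Mx; split; last exact: consec.
by move=> e /andP [_ et]; exact: magic.
Qed.

End Construction.





Lemma enum_nth_inj (F : finFieldType) (M : nat) : (M <= #|F|)%N ->
  forall i j, (i < M)%N -> (j < M)%N -> nth (0 : F) (enum F) i = nth 0 (enum F) j -> i = j.
Proof.
move=> MF i j hi hj /eqP; rewrite nth_uniq ?enum_uniq -?cardE.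
- by move/eqP.
- exact: leq_trans hi MF.
- exact: leq_trans hj MF.
all: by [].
Qed.


Lemma main_thm (t q : nat) :
  (3 <= t)%N -> prime_power q -> (2 * t - 1 <= q)%N ->
  exists M : 'M[int]_((q ^ (2 * t - 1))%N), multimagic_square t M.
Proof.
move=> t3 [p [k [pp [k0 ->]]]] tq.
have [F _ cardF] := pPrimePowerField pp k0.
have [s ts] : exists s, t = s.+3 by exists (t - 3)%N; lia.
subst t.
have mq : (m s <= #|F|)%N by rewrite cardF /m -addnn; lia.
pose alpha (i : nat) : F := nth 0 (enum F) i.
have ainj := enum_nth_inj mq.
set L := [:: (0 : F); 1; -1].
have c3 : (1 < #|~: [set x : F | x \in L]|)%N.
  have h := cardsC [set x : F | x \in L].
  have h2 : (#|[set x : F | x \in L]| <= 3)%N.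
    by apply: leq_trans (card_size L); apply: subset_leq_card; apply/subsetP => x; rewrite inE.
  have f5 : (5 <= #|F|)%N by apply: leq_trans mq; rewrite /m -addnn; lia.
  rewrite -(ltn_add2l #|[set x : F | x \in L]|) h.
  exact: leq_ltn_trans (leq_add h2 (leqnn 1)) f5.
have /card_gt1P [u0 [v0 [hu hv uv]]] := c3.
have nL x : x \in ~: [set x : F | x \in L] -> [/\ x != 0, x != 1 & x != -1].
  by rewrite !inE negb_or negb_or => /and3P [].
apply: (construction (alpha := alpha) ainj uv (nL _ hu) (nL _ hv)).
rewrite card_ffun card_option card_prod card_ord card_bool cardF.
by apply: (congr1 (expn _)); lia.
Qed.

Local Close Scope ring_scope.

Theorem theorem1p2 (t q : nat) :
  (3 <= t)%N -> prime_power q -> (2 * t - 1 <= q)%N ->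
  exists M : 'M[int]_(q ^ (2 * t - 1)), multimagic_square t M.
Proof. exact: main_thm. Qed.
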